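(* For every integer $n \geq 1$, the discrete interval hypergraph $H_n$ satisfies $\mathrm{ch}_{cf}(H_n) \leq \lfloor \log_2 n \rfloor + 1$. That is, for every family $\{L_i\}_{i\in[n]}$ of sets of positive integers with $|L_i| \geq \lfloor \log_2 n\rfloor + 1$ for all $i$, there is a conflict-free coloring $C$ of $H_n$ with $C(i)\in L_i$ for all $i$.
   Context: For $n\ge 1$ let $[n]=\{1,\dots,n\}$ and for $s\le t$ in $[n]$ let $[s,t]=\{i : s\le i\le t\}$. The discrete interval hypergraph $H_n$ has vertex set $[n]$ and hyperedge set $\{[s,t] : s\le t,\ s,t\in[n]\}$. A coloring $C\colon V\to\mathbb{Z}_{>0}$ of a hypergraph $H=(V,\mathcal E)$ is conflict-free if every hyperedge $S\in\mathcal E$ contains a vertex whose color appears exactly once in $S$ (i.e., there is $i$ with $|S\cap C^{-1}(i)|=1$). Given a family $\mathcal L=\{L_v\}_{v\in V}$ of sets of positive integers, $H$ admits a coloring from $\mathcal L$ if the coloring satisfies $C(v)\in L_v$ for all $v$. $H$ is $k$-cf-choosable if for every family $\mathcal L$ with $|L_v|\ge k$ for all $v$, $H$ admits a conflict-free coloring from $\mathcal L$; the cf-choice number $\mathrm{ch}_{cf}(H)$ is the minimum such $k$. *)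

(* Defs.v *)
From mathcomp Require Import all_boot.
Set Implicit Arguments. Unset Strict Implicit. Unset Printing Implicit Defensive.

Definition interval (s t : nat) : seq nat := iota s (t.+1 - s).

(* A hyperedge S (given as a duplicate-free list) is conflict-free under the
   coloring C if some color appears exactly once in S. *)
Definition cf_edge (C : nat -> nat) (S : seq nat) : Prop :=
  exists i : nat, count (fun v => C v == i) S = 1.

Definition cf_coloring_Hn (n : nat) (C : nat -> nat) : Prop :=
  forall s t : nat, 1 <= s -> s <= t -> t <= n -> cf_edge C (interval s t).

Definition has_at_least (k : nat) (L : nat -> Prop) : Prop :=
  exists s : seq nat, uniq s /\ size s = k /\ (forall x, x \in s -> L x).

(* Main.v *)
Require Import Defs.
From Stdlib Require Import Lia.
From mathcomp Require Import all_boot.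

Ltac to_prop := repeat match goal with
 | H : is_true (_ <= _) |- _ => apply (elimT leP) in H
 | H : is_true (_ && _) |- _ => let H1 := fresh "H" in let H2 := fresh "H" in destruct (andP H) as [H1 H2]; clear H
 | H : is_true (_ == _) |- _ => apply (elimT eqP) in H
 | H : is_true (~~ (_ == _)) |- _ => apply (elimN eqP) in H
 | |- is_true (_ <= _) => apply/leP
 | |- is_true (_ && _) => apply/andP; split
 | H : context [addn _ _] |- _ => rewrite -plusE in H
 | H : context [subn _ _] |- _ => rewrite -minusE in H
 | H : context [muln _ _] |- _ => rewrite -multE in H
 | |- context [addn _ _] => rewrite -plusE
 | |- context [subn _ _] => rewrite -minusE
 | |- context [muln _ _] => rewrite -multE
 end.
Ltac nlia := to_prop; lia.

Lemma half_facts {m p : nat} : 0 < m -> m < 2 * p ->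
  [/\ m./2 < m, m./2 < p, m - (m./2).+1 < p & m./2 + (m - (m./2).+1).+1 = m].
Proof.
move=> h1 h2; have E := odd_double_half m; rewrite -addnn in E.
have : odd m <= 1 by case: (odd m).
move: (odd m : nat) E => b E hb.
split; nlia.
Qed.

Definition good (L : nat -> nat -> Prop) (F : seq nat) (k i : nat) :=
  exists s : seq nat, [/\ uniq s, size s = k & forall x, x \in s -> L i x /\ x \notin F].

Lemma good_rem L F k i c : good L F k.+1 i -> good L (c :: F) k i.
Proof.
case=> s [us ss hs].
have hsz : k <= size (rem c s).
  case: (boolP (c \in s)) => hc.
    by rewrite size_rem // ss.
  by rewrite rem_id // ss.
exists (take k (rem c s)); split.
- by apply: take_uniq; apply: rem_uniq.
- by rewrite size_takel.
- move=> x /mem_take hx.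
  have := hx; rewrite (mem_rem_uniq _ us) => /andP[hxc hxs].
  have [h1 h2] := hs x hxs.
  by split => //; rewrite inE negb_or hxc.
Qed.

Lemma cf_edge_ext C C' s t : (forall v, s <= v <= t -> C' v = C v) ->
  cf_edge C (interval s t) -> cf_edge C' (interval s t).
Proof.
move=> hC [i hi]; exists i; rewrite -hi; apply: eq_in_count => v.
rewrite mem_iota => hv /=; rewrite hC //; nlia.
Qed.

Lemma main L k : forall a m F, m < 2 ^ k ->
  (forall i, a <= i < a + m -> good L F k i) ->
  exists C : nat -> nat, (forall i, a <= i < a + m -> L i (C i) /\ C i \notin F) /\
   (forall s t, a <= s -> s <= t -> t < a + m -> cf_edge C (interval s t)).
Proof.
elim: k => [|k IH] a m F hm hL.
  exists (fun _ => 0); rewrite expn0 in hm.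
  split=> [i hi | s t h1 h2 h3]; exfalso; nlia.
case: (posnP m) => [m0|mpos].
  exists (fun _ => 0).
  split=> [i hi | s t h1 h2 h3]; exfalso; nlia.
rewrite expnS in hm.
have [hl1 hl2 hr1 hsum] := half_facts mpos hm.
move: (m./2) (m - (m./2).+1) hl1 hl2 hr1 hsum => l r hl1 hl2 hr1 hsum.
have hmid : a <= a + l < a + m by nlia.
have [s0 [us0 ss0 hs0]] := hL (a + l) hmid.
case: s0 us0 ss0 hs0 => [|c s'] // _ _ hs0.
have [Lc cF] := hs0 c (mem_head _ _).
have [C1 [hC1 cf1]] : exists C : nat -> nat,
   (forall i, a <= i < a + l -> L i (C i) /\ C i \notin c :: F) /\
   (forall s t, a <= s -> s <= t -> t < a + l -> cf_edge C (interval s t)).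
  apply: IH => // i hi; apply: good_rem; apply: hL; nlia.
have [C2 [hC2 cf2]] : exists C : nat -> nat,
   (forall i, (a + l).+1 <= i < (a + l).+1 + r -> L i (C i) /\ C i \notin c :: F) /\
   (forall s t, (a + l).+1 <= s -> s <= t -> t < (a + l).+1 + r -> cf_edge C (interval s t)).
  apply: IH => // i hi; apply: good_rem; apply: hL; nlia.
exists (fun i => if i < a + l then C1 i else if i == a + l then c else C2 i).
split.
  move=> i hi; case: ltnP => h1.
    have [h3 h4] := hC1 i (ltac:(nlia)).
    by split => //; move: h4; rewrite inE negb_or => /andP[].
  case: eqP => h2; first by subst.
  have [h3 h4] := hC2 i (ltac:(nlia)).
  by split => //; move: h4; rewrite inE negb_or => /andP[].
move=> s t hs hst ht.
case: (ltnP t (a + l)) => h1.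
  apply: (@cf_edge_ext C1); last by apply: cf1.
  move=> v hv; have -> : v < a + l by nlia.
  done.
case: (ltnP (a + l) s) => h2.
  apply: (@cf_edge_ext C2); last by apply: cf2; nlia.
  move=> v hv; have hv' : a + l <= v by nlia.
  rewrite ltnNge hv' /=.
  have -> : (v == a + l) = false by apply/negbTE; apply/negP => /eqP E; nlia.
  done.
exists c.
rewrite (@eq_in_count _ _ (pred1 (a + l))); last first.
  move=> v; rewrite mem_iota => hv /=.
  case: ltnP => hv1.
    have [_ h4] := hC1 v (ltac:(nlia)).
    move: h4; rewrite inE negb_or => /andP[hne _]; rewrite (negbTE hne).
    apply/esym/negbTE; apply/negP => /eqP E; nlia.
  case: (eqVneq v (a + l)) => hv2; first by rewrite /= ?eqxx.
  rewrite /=.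
  have [_ h4] := hC2 v (ltac:(nlia)).
  by move: h4; rewrite inE negb_or => /andP[hne _]; rewrite (negbTE hne).
rewrite count_uniq_mem ?iota_uniq // mem_iota.
have -> : (s <= a + l < s + (t.+1 - s)) by nlia.
done.
Qed.

Theorem proposition2p1 (n : nat) (hn : 1 <= n) (L : nat -> nat -> Prop) :
  (forall i x, 1 <= i <= n -> L i x -> 0 < x) ->
  (forall i, 1 <= i <= n -> has_at_least (trunc_log 2 n).+1 (L i)) ->
  exists C : nat -> nat,
    (forall i, 1 <= i <= n -> L i (C i)) /\ cf_coloring_Hn n C.
Proof.
move=> _ hL.
have hL' : forall i, 1 <= i < 1 + n -> good L [::] (trunc_log 2 n).+1 i.
  move=> i hi; have [s [us [ss hs]]] := hL i (ltac:(nlia)).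
  rewrite /good. exists s. split => //. move=> x hx. split => //. exact: hs x hx.
have [C [hC hcf]] := @main L (trunc_log 2 n).+1 1 n [::] (@trunc_log_ltn 2 n isT) hL'.
exists C; split.
  by move=> i hi; case: (hC i (ltac:(nlia))).
move=> s t h1 h2 h3; apply: hcf => //; nlia.
Qed.
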